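(* Let $\mathcal{A}$ be a finite meet semilattice, $V$ a vector space and $(\pi_a)_{a\in\mathcal{A}}$ a family of projectors of $V$ such that $\pi_a\pi_b=\pi_{a\wedge b}$ for all $a,b\in\mathcal{A}$. Let $(s_a)_{a\in\mathcal{A}}$ be the unique family of endomorphisms with $\pi_a=\sum_{b\le a}s_b$ for all $a$. Then $s_as_b=\delta_{a,b}s_a$ for all $a,b\in\mathcal{A}$. *)

(* Defs.v *)
From HB Require Import structures.
From mathcomp Require Import all_boot all_order all_algebra.
Set Implicit Arguments.
Unset Strict Implicit.
Unset Printing Implicit Defensive.

(* Main.v *)
Require Import Defs.
From HB Require Import structures.
From mathcomp Require Import all_boot all_order all_algebra.
Import Order.TTheory GRing.Theory.
Local Open Scope ring_scope.

Theorem mainTheorem6 (d : Order.disp_t) (A : finMeetSemilatticeType d)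
  (K : fieldType) (V : lmodType K)
  (pi : A -> V -> V) (s : A -> V -> V)
  (pi_lin : forall a, linear (pi a))
  (pi_proj : forall a v, pi a (pi a v) = pi a v)
  (pi_meet : forall a b v, pi a (pi b v) = pi (Order.meet a b) v)
  (s_lin : forall a, linear (s a))
  (pi_s : forall a v, pi a v = \sum_(b : A | (b <= a)%O) s b v) :
  forall a b v, s a (s b v) = (if a == b then s a v else 0).
Proof.
have piD a : {morph pi a : x y / x + y}.
  by move=> x y; have := pi_lin a 1 x y; rewrite !scale1r.
have pi0 a : pi a 0 = 0.
  by apply: (addrI (pi a 0)); rewrite -piD !addr0.
have piN a x : pi a (- x) = - pi a x.
  by have := pi_lin a (-1) x 0; rewrite addr0 pi0 addr0 !scaleN1r.
have piB a x y : pi a (x - y) = pi a x - pi a y by rewrite piD piN.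
have pisum a (P : pred A) (F : A -> V) :
    pi a (\sum_(c | P c) F c) = \sum_(c | P c) pi a (F c).
  exact: (big_morph _ (piD a) (pi0 a)).
have sumS b (F : A -> V) :
    \sum_(c | (c <= b)%O) F c = F b + \sum_(c | (c < b)%O) F c.
  rewrite (bigD1 b) //=; congr (_ + _); apply: eq_bigl => c.
  by rewrite lt_def eq_sym andbC.
have sE b v : s b v = pi b v - \sum_(c | (c < b)%O) s c v.
  by rewrite pi_s sumS addrK.
have cardlt (n : nat) (b c : A) : (#|[pred x | (x <= b)%O]| <= n.+1)%N -> (c < b)%O ->
    (#|[pred x | (x <= c)%O]| <= n)%N.
  move=> Hb cb; rewrite -ltnS; apply: leq_trans Hb; apply: proper_card.
  apply/properP; split.
    by apply/subsetP => x; rewrite !inE => xc; exact: le_trans xc (ltW cb).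
  by exists b; rewrite !inE ?lexx // lt_geF.
have card0b (n : nat) (b : A) : (#|[pred x | (x <= b)%O]| <= n)%N -> n = 0%N -> False.
  move=> Hb n0; move: Hb; rewrite n0 leqn0 => /eqP/card0_eq/(_ b).
  by rewrite !inE lexx.
have L1 : forall n b, (#|[pred c | (c <= b)%O]| <= n)%N -> forall a v,
    pi a (s b v) = if (b <= a)%O then s b v else 0.
  elim=> [|n IH] b Hb a v; first by case: (card0b _ _ Hb).
  rewrite {1}sE piB pi_meet pisum.
  rewrite (eq_bigr (fun c => if (c <= a)%O then s c v else 0)); last first.
    by move=> c cb; apply: IH; exact: cardlt Hb cb.
  rewrite -big_mkcondr /=.
  case: ifP => ba.
    rewrite (meet_idPr ba) [in RHS]sE; congr (_ - _); apply: eq_bigl => c.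
    by case cb: (c < b)%O => //=; exact: le_trans (ltW cb) ba.
  rewrite pi_s; apply/eqP; rewrite subr_eq0; apply/eqP; apply: eq_bigl => c.
  rewrite lexI lt_neqAle; case: (eqVneq c b) => [->|_]; first by rewrite ba.
  by rewrite andbC.
have L2 : forall n a, (#|[pred c | (c <= a)%O]| <= n)%N -> forall b v,
    s a (s b v) = if a == b then s a v else 0.
  elim=> [|n IH] a Ha b v; first by case: (card0b _ _ Ha).
  rewrite (sE a (s b v)) (L1 _ b (leqnn _)).
  rewrite (eq_bigr (fun c => if c == b then s b v else 0)); last first.
    move=> c ca; rewrite (IH c (cardlt _ _ _ Ha ca)).
    by case: eqP => [->|].
  rewrite big_mkcond.
  rewrite (eq_bigr (fun c => if c == b then (if (b < a)%O then s b v else 0) else 0)); last first.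
    by move=> c _; case: eqP => [->|] //; case: ifP.
  rewrite -big_mkcond big_pred1_eq.
  case: (eqVneq a b) => [->|ab]; first by rewrite lexx ltxx subr0.
  by rewrite lt_neqAle eq_sym ab /=; case: ifP; rewrite subrr.
by move=> a b v; exact: (L2 _ a (leqnn _)).
Qed.
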